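(* Let $T$ be a key with at most $n$ rows. Then $\mathrm{cap}_n(T)$ is also a key. Moreover, if $T'$ is another key of the same shape, then $\mathrm{cap}_n(T)\ge T'$ (entrywise) if and only if $T\ge T'$ (entrywise) and $\max(T')\le n$.
   Context: Tableaux are drawn in English convention with positive integer entries; $T_c$ denotes the set of entries of column $c$. A key is a tableau whose columns are strictly increasing top to bottom and satisfy $T_1\supseteq T_2\supseteq\cdots$. For a key $T$ with at most $n$ rows, $\mathrm{cap}_n(T)$ is obtained by replacing, in each column, the entries larger than $n$ by the largest integers in $[n]$ that are missing from that column, and then sorting each column increasingly. Inequalities between tableaux of the same shape are entrywise (cell by cell). *)

(* Defs.v *)
From mathcomp Require Import all_boot.
Set Implicit Arguments. Unset Strict Implicit. Unset Printing Implicit Defensive.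

(* A tableau (English convention) is the list of its columns, left to right;
   each column is the list of its entries read top to bottom. *)
Definition tableau := seq (seq nat).

Definition is_tableau (T : tableau) : bool :=
  all (fun col => (0 < size col) && all (fun x => 0 < x) col) T &&
  sorted geq (map size T).

Definition col_subset (D C : seq nat) : bool := all (fun x => x \in C) D.

(* A key: a tableau whose columns strictly increase top to bottom and with
   T_1 ⊇ T_2 ⊇ ... (consecutive inclusions; the relation is transitive). *)
Definition is_key (T : tableau) : bool :=
  is_tableau T &&
  all (fun col => sorted ltn col) T &&
  sorted (fun C D => col_subset D C) T.

Definition at_most_rows (n : nat) (T : tableau) : bool :=
  all (fun col => size col <= n) T.

Definition tab_shape (T : tableau) : seq nat := map size T.

(* cap_n on one column C: the entries > n (say k of them) are replaced by the
   k largest integers of [n] = {1..n} missing from C; then sort increasingly. *)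
Definition cap_col (n : nat) (C : seq nat) : seq nat :=
  let k := count (fun x => n < x) C in
  let missing := [seq i <- iota 1 n | i \notin C] in
  sort leq ([seq x <- C | x <= n] ++ drop (size missing - k) missing).

Definition cap (n : nat) (T : tableau) : tableau := map (cap_col n) T.

Definition entry (T : tableau) (c r : nat) : nat := nth 0 (nth [::] T c) r.

Definition tab_ge (T T' : tableau) : Prop :=
  tab_shape T = tab_shape T' /\
  forall c r, c < size T -> r < size (nth [::] T c) -> entry T' c r <= entry T c r.

Definition max_le (T : tableau) (n : nat) : bool :=
  all (fun col => all (fun x => x <= n) col) T.
Example cap_col_test : cap_col 3 [:: 1; 5] = [:: 1; 3]. Proof. by []. Qed.
Example cap_col_test2 : cap_col 4 [:: 2; 6; 7] = [:: 2; 3; 4]. Proof. by []. Qed.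

(* Main.v *)
Require Import Defs.
From mathcomp Require Import all_boot zify.
Set Implicit Arguments. Unset Strict Implicit.

Definition le_ent (B A : seq nat) := forall r, r < size A -> nth 0 B r <= nth 0 A r.

Lemma L1 (B A : seq nat) : size B = size A -> le_ent B A ->
  forall v, count (leq v) B <= count (leq v) A.
Proof.
elim: B A => [|b B IH] [|a A] //= [eA] H v.
have h0 := H 0 isT. have hr : le_ent B A by move=> r hr; exact: (H r.+1).
have := IH A eA hr v. simpl in h0.
case: (leqP v b) => hb; case: (leqP v a) => ha /=; lia.
Qed.

Lemma L2 (A B : seq nat) : sorted leq A -> sorted leq B -> size B = size A ->
  (forall v, count (leq v) B <= count (leq v) A) -> le_ent B A.
Proof.
elim: A B => [|a A IH] [|b B] //= sA sB [eA] H.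
have aA := order_path_min leq_trans sA.
have bB := order_path_min leq_trans sB.
have sA' := path_sorted sA. have sB' := path_sorted sB.
have hba : b <= a.
  have := H b; rewrite leqnn /=.
  have -> : count (leq b) B = size B by apply/eqP; rewrite -all_count.
  have := count_size (leq b) A. case: (leqP b a) => //; lia.
have hr : le_ent B A.
  apply: IH => // v.
  case: (leqP v a) => hv.
  - have -> : count (leq v) A = size A.
      apply/eqP; rewrite -all_count; apply/allP => x /(allP aA); exact: leq_trans.
    by rewrite -eA count_size.
  - have := H v.
    rewrite (leqNgt v a) hv /=. case: (v <= b) => /=; lia.
by case => [|r] //= hr'; apply: hr.
Qed.

Definition colP n (C : seq nat) := [&& sorted ltn C, all (fun x => 0 < x) C & size C <= n].

Lemma G n (C : seq nat) (P : pred nat) : uniq C -> all (fun x => 0 < x) C ->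
  (forall x, P x -> x <= n) ->
  count P C = count (fun i => P i && (i \in C)) (iota 1 n).
Proof.
move=> uC pC hP; rewrite -!size_filter; apply: perm_size; apply: uniq_perm.
- exact: filter_uniq.
- exact/filter_uniq/iota_uniq.
move=> x; rewrite !mem_filter mem_iota.
case Px: (P x) => //=; case xC: (x \in C) => //=.
have := allP pC x xC; have := hP x Px; lia.
Qed.

Lemma cnt_split v n (C : seq nat) :
  count (leq v) C <= count (fun x => (v <= x) && (x <= n)) C + count (fun x => n < x) C /\
  (v <= n -> count (fun x => (v <= x) && (x <= n)) C + count (fun x => n < x) C <= count (leq v) C).
Proof.
elim: C => [|x C [IH1 IH2]] //=; split; [|move=> h; have := IH2 h];
case: (leqP v x); case: (leqP x n) => /=; lia.
Qed.

Lemma cnt_le_n n (C : seq nat) : count (fun x => x <= n) C + count (fun x => n < x) C = size C.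
Proof. elim: C => //= x C IH; case: (leqP x n) => /=; lia. Qed.

Lemma DL (M : seq nat) t x : sorted ltn M -> x \in M ->
  (x \in drop t M) = (count (leq x) M <= size M - t).
Proof.
move=> sM xM.
have := sM; rewrite (sorted_pairwise ltn_trans) -{1}(cat_take_drop t M) pairwise_cat.
case/and3P=> /allrelP hr _ _.
rewrite -{2}(cat_take_drop t M) count_cat -size_drop.
case xd: (x \in drop t M).
- have -> : count (leq x) (take t M) = 0.
    apply/eqP; rewrite -leqn0 leqNgt -has_count; apply/hasP => [[y yt]].
    have := hr y x yt xd; lia.
  by rewrite add0n count_size.
- have xt : x \in take t M by move: xM; rewrite -{1}(cat_take_drop t M) mem_cat xd orbF.
  have -> : count (leq x) (drop t M) = size (drop t M).
    apply/eqP; rewrite -all_count; apply/allP => y yd; have := hr x y xt yd; lia.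
  have : 0 < count (leq x) (take t M) by rewrite -has_count; apply/hasP; exists x.
  move=> h; apply/esym/negbTE; lia.
Qed.

Definition Mi n (C : seq nat) := [seq i <- iota 1 n | i \notin C].
Definition ki n (C : seq nat) := count (fun x => n < x) C.

Lemma capE n C : cap_col n C =
  sort leq ([seq x <- C | x <= n] ++ drop (size (Mi n C) - ki n C) (Mi n C)).
Proof. by []. Qed.

Lemma colP_uniq n C : colP n C -> uniq C.
Proof. by case/and3P => s _ _; exact: sorted_uniq ltn_trans ltnn _ s. Qed.

Lemma sizeM n C : colP n C -> size (Mi n C) + count (fun x => x <= n) C = n /\ ki n C <= size (Mi n C).
Proof.
move=> cP; have uC := colP_uniq cP; case/and3P: cP => _ pC sC.
have e : count (fun x => x <= n) C = count (fun i => i \in C) (iota 1 n).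
  rewrite (@G n C (fun x => x <= n) uC pC) //; apply: eq_in_count => i.
  by rewrite mem_iota => /andP[_ h] /=; rewrite (_ : i <= n) //; lia.
have e2 := count_predC (fun i => i \in C) (iota 1 n).
rewrite size_iota in e2.
have e3 : size (Mi n C) = count (predC (fun i => i \in C)) (iota 1 n) by rewrite size_filter.
have := cnt_le_n n C. rewrite /ki. lia.
Qed.

Lemma capsize n C : colP n C -> size (cap_col n C) = size C.
Proof.
move=> cP; have [h1 h2] := sizeM cP.
rewrite capE size_sort size_cat size_drop size_filter.
have := cnt_le_n n C; rewrite /ki in h2 *. move: (size (Mi n C)) h1 h2 => m h1 h2. lia.
Qed.

Lemma inM n C x : (x \in Mi n C) = [&& 0 < x, x <= n & x \notin C].
Proof. rewrite mem_filter mem_iota; case: (x \in C) => /=; lia. Qed.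

Lemma cap_le_n n C : all (fun x => x <= n) (cap_col n C).
Proof.
apply/allP => x; rewrite capE mem_sort mem_cat mem_filter.
case/orP => [/andP[] //| /mem_drop]; rewrite inM; lia.
Qed.

Lemma cap_pos n C : all (fun x => 0 < x) C -> all (fun x => 0 < x) (cap_col n C).
Proof.
move=> pC; apply/allP => x; rewrite capE mem_sort mem_cat mem_filter.
case/orP => [/andP[] _ /(allP pC) //| /mem_drop]; rewrite inM; lia.
Qed.

Lemma cap_sorted n C : colP n C -> sorted ltn (cap_col n C).
Proof.
move=> cP; have uC := colP_uniq cP.
rewrite ltn_sorted_uniq_leq sort_sorted ?andbT; last exact: leq_total.
rewrite capE sort_uniq cat_uniq filter_uniq //.
rewrite drop_uniq ?filter_uniq ?iota_uniq // andbT.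
apply/hasPn => x /mem_drop; rewrite inM mem_filter; case/and3P => _ _ /negbTE ->; by rewrite andbF.
Qed.

Lemma count_cap v n C : count (leq v) (cap_col n C) =
  count (fun x => (v <= x) && (x <= n)) C + count (leq v) (drop (size (Mi n C) - ki n C) (Mi n C)).
Proof. rewrite capE; set X := (_ ++ _); move: (permEl (perm_sort leq X)) => /permP ->; by rewrite count_cat count_filter. Qed.

Lemma K1 v n C : count (leq v) (cap_col n C) <= count (leq v) C.
Proof.
case: (leqP v n) => hv.
- rewrite count_cap; have [_ h] := cnt_split v n C; have {}h := h hv.
  have := count_size (leq v) (drop (size (Mi n C) - ki n C) (Mi n C)).
  rewrite size_drop; rewrite /ki in h *.
  move: (size (Mi n C)) => m; lia.
- have -> : count (leq v) (cap_col n C) = 0.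
    apply/eqP; rewrite -leqn0 leqNgt -has_count; apply/hasPn => x xc.
    have := allP (cap_le_n n C) x xc; rewrite /=; lia.
  done.
Qed.

Lemma split_cnt (p q : pred nat) s : count (fun i => p i && q i) s + count (fun i => p i && ~~ q i) s = count p s.
Proof. elim: s => //= x s IH; case: (p x); case: (q x) => /=; lia. Qed.

Lemma sortedM n C : sorted ltn (Mi n C).
Proof. exact/sorted_filter/iota_ltn_sorted/ltn_trans. Qed.

Lemma K2 n C B : colP n C -> sorted ltn B -> all (fun x => 0 < x) B -> all (fun x => x <= n) B ->
  (forall v, count (leq v) B <= count (leq v) C) ->
  forall v, count (leq v) B <= count (leq v) (cap_col n C).
Proof.
move=> cP sB pB nB H v.
have uB : uniq B := sorted_uniq ltn_trans ltnn sB.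
have uC := colP_uniq cP.
have [sz1 sz2] := sizeM cP.
case: (leqP v n) => hv; last first.
  have -> : count (leq v) B = 0.
    apply/eqP; rewrite -leqn0 leqNgt -has_count; apply/hasPn => x xc.
    have := allP nB x xc; rewrite /=; lia.
  done.
rewrite count_cap.
set M := Mi n C in sz1 sz2 *. set t := size M - ki n C.
have := sortedM n C; rewrite -/M (sorted_pairwise ltn_trans) -{1}(cat_take_drop t M) pairwise_cat.
case/and3P=> /allrelP hr _ _.
case hh: (has (leq v) (take t M)).
- have -> : count (leq v) (drop t M) = size (drop t M).
    apply/eqP; rewrite -all_count; apply/allP => y yd.
    case/hasP: hh => x xt /= hx; have := hr x y xt yd; lia.
  rewrite size_drop /t; have [h _] := cnt_split v n C; have := H v.
  rewrite /ki in sz2 h *; move: (size M) sz2 => m sz2; lia.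
- have e1 : count (leq v) (drop t M) = count (leq v) M.
    rewrite -{2}(cat_take_drop t M) count_cat.
    move/negbT: hh; rewrite has_count -leqNgt leqn0 => /eqP ->; done.
  rewrite e1 /M /Mi count_filter.
  rewrite (@G n C (fun x => (v <= x) && (x <= n)) uC) ?(and3P cP).2; last first.
  + by move=> x /andP[].
  + by case/and3P: cP.
  have -> : count (fun i => ((v <= i) && (i <= n)) && (i \in C)) (iota 1 n) =
            count (fun i => (v <= i) && (i \in C)) (iota 1 n).
    apply: eq_in_count => i; rewrite mem_iota => /andP[_ h].
    by rewrite (_ : i <= n) ?andbT //; lia.
  have -> : count (predI (leq v) (fun i => i \notin C)) (iota 1 n) =
            count (fun i => (v <= i) && ~~ (i \in C)) (iota 1 n) by [].
  rewrite split_cnt -!size_filter; apply: uniq_leq_size; first exact: filter_uniq.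
  move=> x; rewrite !mem_filter mem_iota => /andP[-> xB] /=.
  have := allP nB x xB; have := allP pB x xB; rewrite /=; lia.
Qed.

Lemma SUB n C D : colP n C -> colP n D -> col_subset D C ->
  col_subset (cap_col n D) (cap_col n C).
Proof.
move=> cC cD sub; have uD := colP_uniq cD.
have [szC1 szC2] := sizeM cC; have [szD1 szD2] := sizeM cD.
apply/allP => y; rewrite capE mem_sort mem_cat mem_filter => /orP [/andP[yn yD] | yd].
  by rewrite capE mem_sort mem_cat mem_filter (allP sub y yD) yn.
have yM := mem_drop yd.
rewrite capE mem_sort mem_cat mem_filter.
case yC: (y \in C).
  by move: yM; rewrite inM => /and3P[_ -> _].
have yMC : y \in Mi n C by move: yM; rewrite !inM yC => /and3P[-> -> _].
rewrite DL ?sortedM // orbC; apply/orP; left.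
rewrite DL ?sortedM // in yd.
have h1 : count (leq y) (Mi n C) <= count (leq y) (Mi n D).
  rewrite /Mi !count_filter; apply: sub_count => i /= /andP[-> iC] /=.
  by apply/negP => iD; move/negP: iC; apply; exact: (allP sub).
have h2 : ki n D <= ki n C.
  rewrite /ki -!size_filter; apply: uniq_leq_size; first exact: filter_uniq.
  by move=> x; rewrite !mem_filter => /andP[-> xD]; rewrite (allP sub x xD).
move: (size (Mi n C)) (size (Mi n D)) szC2 szD2 yd => mc md szC2 szD2 yd.
lia.
Qed.

Lemma COL n C B : colP n C -> sorted ltn B -> all (fun x => 0 < x) B -> size B = size C ->
  (le_ent B (cap_col n C) <-> le_ent B C /\ all (fun x => x <= n) B).
Proof.
move=> cP sB pB eS.
have sC : sorted leq C by case/and3P: cP; rewrite ltn_sorted_uniq_leq => /andP[].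
have sB' : sorted leq B by move: sB; rewrite ltn_sorted_uniq_leq => /andP[].
have sK : sorted leq (cap_col n C) by apply: sort_sorted; exact: leq_total.
have eK := capsize cP.
split.
- move=> H; split.
  + apply: L2 => // v; apply: leq_trans (K1 v n C).
    by apply: L1 => //; rewrite eK.
  + apply/(all_nthP 0) => r hr.
    have hr' : r < size (cap_col n C) by rewrite eK -eS.
    apply: leq_trans (H r hr') _.
    exact: (allP (cap_le_n n C)) _ (mem_nth 0 hr').
- case=> H nB; apply: L2 => //; first by rewrite eK.
  apply: K2 => // v; exact: L1.
Qed.

Lemma TG X T' : tab_shape X = tab_shape T' ->
  (tab_ge X T' <-> forall c, c < size X -> le_ent (nth [::] T' c) (nth [::] X c)).
Proof.
move=> e; split; first by case=> _ H c hc r hr; exact: H.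
by move=> H; split => // c r hc hr; exact: H.
Qed.

Theorem lemma3p2 (n : nat) (T : tableau) :
  is_key T -> at_most_rows n T ->
  is_key (cap n T) /\
  (forall T' : tableau, is_key T' -> tab_shape T' = tab_shape T ->
     (tab_ge (cap n T) T' <-> tab_ge T T' /\ max_le T' n)).
Proof.
move=> kT rT.
move: kT; rewrite /is_key /is_tableau => /andP[/andP[/andP[tP sS] sL] sK].
have cols : all (colP n) T.
  apply/allP => C CT; rewrite /colP (allP sL C CT) (allP rT C CT).
  by case/andP: (allP tP C CT) => _ ->.
have capS : map size (cap n T) = map size T.
  rewrite /cap -map_comp; apply/eq_in_map => C CT /=; exact: capsize (allP cols C CT).
split.
  rewrite /is_key /is_tableau capS sS andbT; apply/andP; split; [apply/andP; split|].
  - rewrite /cap all_map; apply/allP => C CT /=.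
    rewrite capsize ?(allP cols C CT) //.
    by case/andP: (allP tP C CT) => -> pC /=; exact: cap_pos.
  - rewrite /cap all_map; apply/allP => C CT /=; exact: cap_sorted (allP cols C CT).
  - rewrite /cap sorted_map; apply: (sub_in_sorted (P := colP n)) cols sK.
    by move=> C D hC hD /=; exact: SUB.
move=> T' kT' eSh.
move: kT'; rewrite /is_key /is_tableau => /andP[/andP[/andP[tP' _] sL'] _].
have eT : size T' = size T by rewrite -(size_map size T') -(size_map size T); exact: (congr1 size eSh).
have colC : forall c, c < size T -> colP n (nth [::] T c) by move=> c hc; exact: (all_nthP [::] cols).
have colB : forall c, c < size T -> sorted ltn (nth [::] T' c) && all (fun x => 0 < x) (nth [::] T' c).
  move=> c hc; rewrite -eT in hc.
  rewrite (all_nthP [::] sL' c hc) /=.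
  by case/andP: (all_nthP [::] tP' c hc).
have colS : forall c, c < size T -> size (nth [::] T' c) = size (nth [::] T c).
  move=> c hc; rewrite -(nth_map [::] 0 size) ?eT // -(nth_map [::] 0 size hc).
  by rewrite /tab_shape in eSh; rewrite eSh.
have capN : forall c, c < size T -> nth [::] (cap n T) c = cap_col n (nth [::] T c).
  by move=> c hc; rewrite /cap (nth_map [::]).
have szc : size (cap n T) = size T by rewrite size_map.
rewrite (TG (X := cap n T)); last by rewrite /tab_shape capS.
rewrite (TG (X := T)) //.
have ML : max_le T' n <-> forall c, c < size T -> all (fun x => x <= n) (nth [::] T' c).
  split.
  - by move=> /(all_nthP [::]) H c hc; apply: H; rewrite eT.
  - by move=> H; apply/(all_nthP [::]) => c hc; apply: H; rewrite -eT.
rewrite ML szc.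
split.
- move=> H; split => c hc.
  + case/andP: (colB c hc) => s p.
    by case: (COL (colC c hc) s p (colS c hc)) => h _; case: (h _) => //; rewrite -capN //; exact: H.
  + case/andP: (colB c hc) => s p.
    by case: (COL (colC c hc) s p (colS c hc)) => h _; case: (h _) => //; rewrite -capN //; exact: H.
- case=> H1 H2 c hc; rewrite capN //.
  case/andP: (colB c hc) => s p.
  by case: (COL (colC c hc) s p (colS c hc)) => _ h; apply: h; split; [exact: H1|exact: H2].
Qed.
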